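(* Let $1\le m\le n-1$, let $A\otimes B\in Y$, and let $\gamma\in\mathrm{GL}_{m(n-m)}(\mathbb{Z})$ be such that $(A\otimes B)\gamma\in Y$. Then $\gamma=\gamma_m\otimes\gamma_{n-m}$ with $\gamma_m\in\mathrm{GL}_m(\mathbb{Z})$ and $\gamma_{n-m}\in\mathrm{GL}_{n-m}(\mathbb{Z})$.
   Context: $Y=\{A\otimes B: A\in\mathrm{Mat}_{n\times m}(\mathbb{R}),B\in\mathrm{Mat}_{n\times(n-m)}(\mathbb{R})$ of full rank, column space of $A$ orthogonal to column space of $B\}$, where $A\otimes B=(a_{ij}B)_{i,j}$ denotes the Kronecker product (an $n^2\times m(n-m)$ matrix); similarly $\gamma_m\otimes\gamma_{n-m}$ is the Kronecker product. *)

(* Defs.v *)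
From HB Require Import structures.
From mathcomp Require Import all_boot all_order all_algebra.
From mathcomp Require Import reals.
Set Implicit Arguments. Unset Strict Implicit. Unset Printing Implicit Defensive.
Import Order.TTheory GRing.Theory Num.Theory.
Local Open Scope ring_scope.

(* Row index (i,k) of 'I_m1 * 'I_m2
   is encoded as mxvec_index i k, i.e. lexicographically (value i*m2 + k), so
   kron A B (mxvec_index i k) (mxvec_index j l) = A i j * B k l. *)
Definition kron (R : ringType) m1 n1 m2 n2
    (A : 'M[R]_(m1, n1)) (B : 'M[R]_(m2, n2)) : 'M[R]_(m1 * m2, n1 * n2) :=
  \matrix_(r, c)
    let ik := enum_val (cast_ord (esym (mxvec_cast m1 m2)) r) in
    let jl := enum_val (cast_ord (esym (mxvec_cast n1 n2)) c) in
    A ik.1 jl.1 * B ik.2 jl.2.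

Definition goodpair (R : realType) (n m : nat)
    (A : 'M[R]_(n, m)) (B : 'M[R]_(n, n - m)) : Prop :=
  \rank A = m /\ \rank B = (n - m)%N /\ A^T *m B = 0.

Definition inY (R : realType) (n m : nat) (M : 'M[R]_(n * n, m * (n - m))) : Prop :=
  exists (A : 'M[R]_(n, m)) (B : 'M[R]_(n, n - m)), goodpair A B /\ M = kron A B.

Definition intmx (R : realType) p q (g : 'M[int]_(p, q)) : 'M[R]_(p, q) :=
  map_mx (fun z : int => z%:~R) g.

Lemma kronE (R : ringType) m1 n1 m2 n2 (A : 'M[R]_(m1, n1)) (B : 'M[R]_(m2, n2))
  i k j l : kron A B (mxvec_index i k) (mxvec_index j l) = A i j * B k l.
Proof. by rewrite mxE /mxvec_index !cast_ordK !enum_rankK. Qed.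

(* Main.v *)
Require Import Defs.
From HB Require Import structures.
From mathcomp Require Import all_boot all_order all_algebra.
From mathcomp Require Import reals zify.
Import Order.TTheory GRing.Theory Num.Theory.
Local Open Scope ring_scope.
Set Implicit Arguments. Unset Strict Implicit. Unset Printing Implicit Defensive.

Lemma sum_mxvec (R : nmodType) m n (F : 'I_(m * n) -> R) :
  \sum_(r < m * n) F r = \sum_(i < m) \sum_(j < n) F (mxvec_index i j).
Proof.
rewrite (reindex (uncurry (@mxvec_index m n))) /=; last first.
  exact: (@curry_mxvec_bij m n).
by rewrite pair_big /=; apply: eq_bigr => -[i j].
Qed.

Lemma kron_mul (R : comRingType) m1 n1 m2 n2 p1 p2
  (A : 'M[R]_(m1, n1)) (B : 'M[R]_(m2, n2)) (C : 'M[R]_(n1, p1)) (D : 'M[R]_(n2, p2)) :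
  kron A B *m kron C D = kron (A *m C) (B *m D).
Proof.
apply/matrixP => r c; case/mxvec_indexP: r => i k; case/mxvec_indexP: c => j l.
rewrite kronE !mxE sum_mxvec mulr_suml; apply: eq_bigr => a _.
rewrite mulr_sumr; apply: eq_bigr => b _.
by rewrite !kronE mulrACA.
Qed.

Lemma kron11 (R : ringType) m n : kron (1%:M : 'M[R]_m) (1%:M : 'M[R]_n) = 1%:M.
Proof.
apply/matrixP => r c; case/mxvec_indexP: r => i k; case/mxvec_indexP: c => j l.
rewrite kronE !mxE.
have -> : (mxvec_index i k == mxvec_index j l) = (i == j) && (k == l).
  apply/eqP/andP => [h|[/eqP-> /eqP->]] //.
  have := congr1 (fun x => enum_val (cast_ord (esym (mxvec_cast m n)) x)) h.
  by rewrite /mxvec_index !cast_ordK !enum_rankK => -[-> ->].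
by case: (i == j); case: (k == l); rewrite ?mulr1n ?mulr0n ?mulr1 ?mulr0.
Qed.
Lemma int_factor (I J : finType) (f : I -> int) (h : J -> int)
  (gam : I -> J -> int) (c : int) :
  c != 0 -> (exists i, f i != 0) -> (forall i j, f i * h j = c * gam i j) ->
  exists (u : I -> int) (v : J -> int), forall i j, u i * v j = gam i j.
Proof.
move=> c0 [i0 fi0] E.
pose g := (\big[gcdn/0%N]_(i : I) `|f i|%N).
have gd : forall i, (g %| `|f i|)%N.
  by move=> i; rewrite /g (bigD1 i) //= dvdn_gcdl.
have g0 : (g != 0)%N.
  apply/negP => /eqP g0; have := gd i0; rewrite g0 dvd0n absz_eq0 => /eqP f0.
  by rewrite f0 eqxx in fi0.
have cd : forall j, (c %| g%:Z * h j)%Z.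
  move=> j; rewrite dvdzE abszM /= /g.
  apply: (big_ind (fun y => `|c| %| y * `|h j|)%N).
  - by rewrite mul0n dvdn0.
  - by move=> x y hx hy; rewrite muln_gcdl dvdn_gcd hx hy.
  - move=> i _; have := E i j; move/(congr1 (fun z : int => `|z|%N)).
    by rewrite !abszM => ->; rewrite dvdn_mulr.
exists (fun i => (f i %/ g%:Z)%Z), (fun j => ((g%:Z * h j) %/ c)%Z) => i j.
have e1 : f i = (f i %/ g%:Z)%Z * g%:Z by rewrite divzK // dvdzE.
have e2 : g%:Z * h j = ((g%:Z * h j) %/ c)%Z * c by rewrite divzK.
apply: (@mulIf _ (g%:Z * c)); first by rewrite mulf_neq0.
rewrite mulrACA -e1 -e2 mulrCA E.

by rewrite mulrA mulrC.
Qed.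

Lemma intmxE (R : realType) p q (g : 'M[int]_(p, q)) i j : intmx R g i j = (g i j)%:~R.
Proof. by rewrite mxE. Qed.

Lemma kron_factor (R : realType) p p' q q' (gam : 'M[int]_(p * q, p' * q'))
  (P : 'M[R]_(p, p')) (Q : 'M[R]_(q, q')) :
  gam != 0 -> intmx R gam = kron P Q ->
  exists (U : 'M[int]_(p, p')) (V : 'M[int]_(q, q')), gam = kron U V.
Proof.
move=> gn0 E.
have ER : forall i k j l, (gam (mxvec_index i k) (mxvec_index j l))%:~R = P i j * Q k l :> R.
  by move=> i k j l; rewrite -intmxE E kronE.
have [r [c gc]] : exists r c, gam r c != 0.
  case: (pickP (fun rc : 'I_(p*q) * 'I_(p'*q') => gam rc.1 rc.2 != 0)) => [[r c] /= hh|hh].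
    by exists r, c.
  case/negP: gn0; apply/eqP/matrixP => r c; rewrite mxE.
  by move: (hh (r, c)) => /= /negbFE/eqP.
move: gc; case/mxvec_indexP: r => i0 k0; case/mxvec_indexP: c => j0 l0 gc.
pose f := fun x : 'I_p * 'I_p' => gam (mxvec_index x.1 k0) (mxvec_index x.2 l0).
pose h := fun y : 'I_q * 'I_q' => gam (mxvec_index i0 y.1) (mxvec_index j0 y.2).
pose G := fun (x : 'I_p * 'I_p') (y : 'I_q * 'I_q') =>
  gam (mxvec_index x.1 y.1) (mxvec_index x.2 y.2).
have [u [v uv]] : exists (u : 'I_p * 'I_p' -> int) (v : 'I_q * 'I_q' -> int),
    forall x y, u x * v y = G x y.
  apply: (@int_factor _ _ f h G _ gc); first by exists (i0, j0).
  move=> [i j] [k l]; apply/eqP; rewrite -(eqr_int R) !intrM /f /h /G /= !ER.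
  by apply/eqP; rewrite mulrACA [in RHS]mulrACA [P i0 j0 * _]mulrC.
exists (\matrix_(i, j) u (i, j)), (\matrix_(k, l) v (k, l)).
apply/matrixP => r c; case/mxvec_indexP: r => i k; case/mxvec_indexP: c => j l.
by rewrite kronE !mxE uv.
Qed.

Lemma mxvec_index_eq m n (i j : 'I_m) (k l : 'I_n) :
  (mxvec_index i k == mxvec_index j l) = (i == j) && (k == l).
Proof.
apply/eqP/andP => [h|[/eqP-> /eqP->]] //.
have := congr1 (fun x => enum_val (cast_ord (esym (mxvec_cast m n)) x)) h.
by rewrite /mxvec_index !cast_ordK !enum_rankK => -[-> ->].
Qed.

Lemma kron0 (R : comRingType) p p' q q' (Y : 'M[R]_(q, q')) :
  kron (0 : 'M[R]_(p, p')) Y = 0.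
Proof.
apply/matrixP => r c; case/mxvec_indexP: r => i k; case/mxvec_indexP: c => j l.
by rewrite kronE !mxE mul0r.
Qed.

Lemma kronr0 (R : comRingType) p p' q q' (X : 'M[R]_(p, p')) :
  kron X (0 : 'M[R]_(q, q')) = 0.
Proof.
apply/matrixP => r c; case/mxvec_indexP: r => i k; case/mxvec_indexP: c => j l.
by rewrite kronE !mxE mulr0.
Qed.

Lemma unit_kron_l (R : realType) p q (X : 'M[R]_p) (Y : 'M[R]_q) (k0 : 'I_q) :
  kron X Y \in unitmx -> X \in unitmx.
Proof.
move=> u; rewrite unitmxE unitfE; apply/negP => /det0P [v vn0 vX].
pose w : 'rV[R]_q := delta_mx 0 k0.
have e : kron v w *m kron X Y = 0 by rewrite kron_mul vX kron0.
have e2 : kron v w = 0.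
  by rewrite -[kron v w]mulmx1 -(mulmxV u) mulmxA e mul0mx.
case/negP: vn0; apply/eqP/matrixP => a j; rewrite [a]ord1 mxE.
have := congr1 (fun M : 'M[R]_(1 * 1, p * q) => M (mxvec_index (ord0 : 'I_1) (ord0 : 'I_1)) (mxvec_index j k0)) e2.
by rewrite kronE /w !mxE !eqxx mulr1.
Qed.

Lemma unit_kron_r (R : realType) p q (X : 'M[R]_p) (Y : 'M[R]_q) (i0 : 'I_p) :
  kron X Y \in unitmx -> Y \in unitmx.
Proof.
move=> u; rewrite unitmxE unitfE; apply/negP => /det0P [v vn0 vY].
pose w : 'rV[R]_p := delta_mx 0 i0.
have e : kron w v *m kron X Y = 0 by rewrite kron_mul vY kronr0.
have e2 : kron w v = 0.
  by rewrite -[kron w v]mulmx1 -(mulmxV u) mulmxA e mul0mx.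
case/negP: vn0; apply/eqP/matrixP => a j; rewrite [a]ord1 mxE.
have := congr1 (fun M : 'M[R]_(1 * 1, p * q) => M (mxvec_index (ord0 : 'I_1) (ord0 : 'I_1)) (mxvec_index i0 j)) e2.
by rewrite kronE /w !mxE !eqxx mul1r.
Qed.

Lemma unit_neq0 N (M : 'M[int]_N) (r : 'I_N) : M \in unitmx -> M != 0.
Proof.
move=> u; apply/negP => /eqP M0; have := mulVmx u; rewrite M0 mulmx0 => /matrixP/(_ r r).
by rewrite !mxE eqxx.
Qed.

Lemma intmx_kron (R : realType) p p' q q' (X : 'M[int]_(p, p')) (Y : 'M[int]_(q, q')) :
  intmx R (kron X Y) = kron (intmx R X) (intmx R Y).
Proof.
apply/matrixP => r c; case/mxvec_indexP: r => i k; case/mxvec_indexP: c => j l.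
by rewrite kronE !intmxE kronE intrM.
Qed.

Lemma kron_eq1 p q (S : 'M[int]_p) (T : 'M[int]_q) (i0 : 'I_p) (k0 : 'I_q) :
  kron S T = 1%:M -> S \in unitmx /\ T \in unitmx.
Proof.
move=> E.
have EE : forall i j k l, S i j * T k l = ((i == j) && (k == l))%:R.
  move=> i j k l; have := congr1 (fun M : 'M[int]_(p * q) => M (mxvec_index i k) (mxvec_index j l)) E.
  by rewrite kronE mxE mxvec_index_eq.
split.
- have : S *m (T k0 k0)%:M = 1%:M.
    apply/matrixP => i j; rewrite mul_mx_scalar !mxE mulrC EE eqxx andbT.
    by [].
  by case/mulmx1_unit.
- have : T *m (S i0 i0)%:M = 1%:M.
    apply/matrixP => k l; rewrite mul_mx_scalar !mxE EE eqxx.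
    by [].
  by case/mulmx1_unit.
Qed.

Theorem mainTheorem11 (R : realType) (n m : nat) (hm1 : (1 <= m)%N) (hm2 : (m <= n - 1)%N)
  (A : 'M[R]_(n, m)) (B : 'M[R]_(n, n - m)) (hAB : goodpair A B)
  (gamma : 'M[int]_(m * (n - m))) (hgamma : gamma \in unitmx)
  (hY : inY (kron A B *m intmx R gamma)) :
  exists (gm : 'M[int]_m) (gnm : 'M[int]_(n - m)),
    [/\ gm \in unitmx, gnm \in unitmx & gamma = kron gm gnm].
Proof.
case: hAB => rA [rB _].
have i0 : 'I_m by exists 0%N.
have k0 : 'I_(n - m) by exists 0%N; lia.
have [Ap ApA] : exists Ap : 'M[R]_(m, n), Ap *m A = 1%:M.
  by apply/row_fullP; rewrite /row_full rA.
have [Bp BpB] : exists Bp : 'M[R]_(n - m, n), Bp *m B = 1%:M.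
  by apply/row_fullP; rewrite /row_full rB.
case: hY => A' [B' [_ EY]].
have EG : intmx R gamma = kron (Ap *m A') (Bp *m B').
  rewrite -kron_mul -EY mulmxA kron_mul ApA BpB kron11 mul1mx //.
have gn0 : gamma != 0 := unit_neq0 (mxvec_index i0 k0) hgamma.
have [gm [gnm Eg]] := kron_factor gn0 EG.
exists gm, gnm; suff [ua ub] : gm \in unitmx /\ gnm \in unitmx by split.
pose H := invmx gamma.
have uR : intmx R gamma \in unitmx.
  have : intmx R gamma *m intmx R H = 1%:M by rewrite -map_mxM mulmxV // map_mx1.
  by case/mulmx1_unit.
have uX : intmx R gm \in unitmx.
  by apply: (unit_kron_l (Y := intmx R gnm) k0); rewrite -intmx_kron -Eg.
have uY : intmx R gnm \in unitmx.
  by apply: (unit_kron_r (X := intmx R gm) i0); rewrite -intmx_kron -Eg.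
have EH : intmx R H = kron (invmx (intmx R gm)) (invmx (intmx R gnm)).
  have e1 : kron (invmx (intmx R gm)) (invmx (intmx R gnm)) *m intmx R gamma = 1%:M.
    by rewrite Eg intmx_kron kron_mul !mulVmx // kron11.
  rewrite -[intmx R H]mul1mx -e1 -mulmxA -map_mxM mulmxV // map_mx1 mulmx1 //.
have Hn0 : H != 0.
  by apply: (unit_neq0 (mxvec_index i0 k0)); rewrite unitmx_inv.
have [U [V EUV]] := kron_factor Hn0 EH.
have E1 : kron (U *m gm) (V *m gnm) = 1%:M.
  by rewrite -kron_mul -EUV -Eg mulVmx.
have [u1 u2] := kron_eq1 i0 k0 E1.
by move: u1 u2; rewrite !unitmx_mul => /andP[_ ->] /andP[_ ->].
Qed.
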